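(* Let $n$, $m$ and $d$ be integers with $n\geq 5$, $m\geq 5$ and $d\geq 3$. Let $G\in T_{n,m}$, and let $v$ be a vertex of $G$ of degree $1$ whose unique neighbor is the terminal $s$. If $G-sv$ is not complete, then there exists $H\in T_{n,m}$ that is $d$-stronger than $G$.
   Context: All graphs are finite, simple and undirected. A two-terminal graph is a graph $G$ together with two distinguished vertices $s,t$ (the terminals). $T_{n,m}$ denotes the set of all pairwise nonisomorphic (with isomorphisms preserving the set of terminals) two-terminal graphs with $n$ vertices and $m$ edges. A two-terminal graph is called complete if the connected component containing both terminals is a complete graph. $G-sv$ is the two-terminal graph obtained from $G$ by deleting the edge $sv$. For a positive integer $d$, a $d$-pathset of a two-terminal graph $G$ is a spanning subgraph of $G$ containing a path of length (number of edges) at most $d$ joining $s$ and $t$; $N_i^d(G)$ is the number of $d$-pathsets of $G$ with exactly $i$ edges. For $G,H\in T_{n,m}$, $H$ is $d$-stronger than $G$ if $N_i^d(H)\geq N_i^d(G)$ for every $i\in\{1,\ldots,m\}$ and $N_j^d(H)>N_j^d(G)$ for some $j\in\{1,\ldots,m\}$. *)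

(* Defs.v *)
From mathcomp Require Import all_boot.
Set Implicit Arguments. Unset Strict Implicit. Unset Printing Implicit Defensive.

(* A two-terminal graph on the vertex set 'I_n: an edge set E of
   2-element subsets of 'I_n, and two distinct terminals s, t. *)
Record ttgraph (n : nat) := TTGraph {
  tt_edges : {set {set 'I_n}};
  tt_s : 'I_n;
  tt_t : 'I_n }.

Definition tt_wf n (G : ttgraph n) : bool :=
  [forall x in tt_edges G, #|x| == 2] && (tt_s G != tt_t G).

(* G is in T_{n,m} (up to isomorphism): well-formed with m edges *)
Definition in_T n m (G : ttgraph n) : bool :=
  tt_wf G && (#|tt_edges G| == m).

Definition adj n (E : {set {set 'I_n}}) : rel 'I_n :=
  fun x y => [set x; y] \in E.

Definition degree n (E : {set {set 'I_n}}) (v : 'I_n) : nat :=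
  #|[set y | adj E v y]|.

(* the path is s :: p, with p a k-tuple of vertices, k <= d edges *)
Definition has_short_path n (F : {set {set 'I_n}}) (s t : 'I_n) (d : nat) : bool :=
  [exists k : 'I_d.+1, exists p : k.-tuple 'I_n,
    [&& path (adj F) s p, last s p == t & uniq (s :: p)]].

(* d-pathsets of G: spanning subgraphs (subsets of the edge set) *)
Definition is_pathset n (G : ttgraph n) (d : nat) (F : {set {set 'I_n}}) : bool :=
  (F \subset tt_edges G) && has_short_path F (tt_s G) (tt_t G) d.

Definition N n (d i : nat) (G : ttgraph n) : nat :=
  #|[set F : {set {set 'I_n}} | is_pathset G d F && (#|F| == i)]|.

(* H is d-stronger than G (both assumed in T_{n,m}) *)
Definition stronger n (d m : nat) (H G : ttgraph n) : Prop :=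
  (forall i, 1 <= i <= m -> N d i G <= N d i H) /\
  (exists j, 1 <= j <= m /\ N d j G < N d j H).

Definition del_edge n (G : ttgraph n) (x y : 'I_n) : ttgraph n :=
  TTGraph (tt_edges G :\ [set x; y]) (tt_s G) (tt_t G).

Definition complete n (G : ttgraph n) : Prop :=
  let c := connect (adj (tt_edges G)) in
  c (tt_s G) (tt_t G) /\
  forall x y, c (tt_s G) x -> c (tt_s G) y -> x != y -> adj (tt_edges G) x y.

(* Main.v *)
Require Import Defs.
From mathcomp Require Import all_boot.
From mathcomp Require Import zify.
From Stdlib Require Import Classical.
Set Implicit Arguments. Unset Strict Implicit. Unset Printing Implicit Defensive.

Section S.
Variable n : nat.
Implicit Types (E F K : {set {set 'I_n}}) (s t x y v : 'I_n).

Lemma hspP F s t d :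
  reflect (exists p : seq 'I_n, [/\ size p <= d, path (adj F) s p, last s p == t & uniq (s :: p)])
    (has_short_path F s t d).
Proof.
apply: (iffP existsP) => [[k /existsP [p /and3P [h1 h2 h3]]] | [p [h0 h1 h2 h3]]].
  exists (val p); split => //; rewrite size_tuple -ltnS; exact: ltn_ord.
have h : size p < d.+1 by rewrite ltnS.
exists (Ordinal h); apply/existsP; exists (in_tuple p); by apply/and3P.
Qed.

Lemma hsp_mono F F' s t d : F \subset F' -> has_short_path F s t d -> has_short_path F' s t d.
Proof.
move=> sub /hspP [p [h0 h1 h2 h3]]; apply/hspP; exists p; split => //.
apply: sub_path h1 => a b; rewrite /adj; exact: (subsetP sub).
Qed.

Lemma adjC E x y : adj E x y = adj E y x.
Proof. by rewrite /adj setUC. Qed.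

Lemma hsp_s_iso F s t d : s != t -> (forall y, ~~ adj F s y) -> ~~ has_short_path F s t d.
Proof.
move=> st H; apply/hspP => [[p [_ hp hl _]]].
case: p hp hl => [|y p] /=; first by move=> _ /eqP e; rewrite e eqxx in st.
by case/andP => h _; have := H y; rewrite h.
Qed.

Lemma hsp_t_iso F s t d : s != t -> (forall x, ~~ adj F x t) -> ~~ has_short_path F s t d.
Proof.
move=> st H; apply/hspP => [[p [_ hp hl _]]].
case/lastP: p hp hl => [|q y] /=; first by move=> _ /eqP e; rewrite e eqxx in st.
rewrite rcons_path last_rcons => /andP[_ h] /eqP e; subst y.
by have := H (last s q); rewrite h.
Qed.

Lemma edge_neq E x y : [forall z in E, #|z| == 2] -> [set x; y] \in E -> x != y.
Proof. by move=> /forallP /(_ [set x; y]) h xy; move: h; rewrite xy cards2 /=; case: (x != y). Qed.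

Lemma swap m d E s t (f e : {set 'I_n}) :
  [forall x in E, #|x| == 2] -> s != t -> #|E| == m ->
  f \in E -> e \notin E -> #|e| == 2 ->
  (forall F, F \subset E -> has_short_path F s t d -> f \in F -> has_short_path (F :\ f) s t d) ->
  in_T m (TTGraph (e |: (E :\ f)) s t) /\
  (forall i, N d i (TTGraph E s t) <= N d i (TTGraph (e |: (E :\ f)) s t)) /\
  (forall K, K \subset e |: (E :\ f) -> e \in K -> has_short_path K s t d ->
     ~~ has_short_path (K :\ e) s t d ->
     N d #|K| (TTGraph E s t) < N d #|K| (TTGraph (e |: (E :\ f)) s t)).
Proof.
move=> hwf hst hcard fE eE e2 hus.
have eEf : e \notin E :\ f by rewrite in_setD1 (negbTE eE) andbF.
split.
  rewrite /in_T /tt_wf /= hst andbT; apply/andP; split.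
    apply/forallP => z; apply/implyP; rewrite !inE => /orP[/eqP->//|/andP[_ zE]].
    by have := forallP hwf z; rewrite zE.
  by rewrite cardsU1 eEf -(eqP hcard) (cardsD1 f E) fE.
pose phi F := if f \in F then e |: (F :\ f) else F.
pose A i := [set F | is_pathset (TTGraph E s t) d F && (#|F| == i)].
pose B i := [set F | is_pathset (TTGraph (e |: (E :\ f)) s t) d F && (#|F| == i)].
have inj i : {in A i &, injective phi}.
  move=> F1 F2; rewrite !inE /is_pathset /= => /andP[/andP[s1 _] _] /andP[/andP[s2 _] _].
  have eF1 : e \notin F1 by apply: contra eE; apply: (subsetP s1).
  have eF2 : e \notin F2 by apply: contra eE; apply: (subsetP s2).
  have eF1' : e \notin F1 :\ f by rewrite in_setD1 (negbTE eF1) andbF.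
  have eF2' : e \notin F2 :\ f by rewrite in_setD1 (negbTE eF2) andbF.
  rewrite /phi; case: ifP => h1; case: ifP => h2.
  - move=> eq; have: (e |: (F1 :\ f)) :\ e = (e |: (F2 :\ f)) :\ e by rewrite eq.
    by rewrite !setU1K // => eq'; rewrite -(setD1K h1) -(setD1K h2) eq'.
  - by move=> eq; have := setU11 e (F1 :\ f); rewrite eq (negbTE eF2).
  - by move=> eq; have := setU11 e (F2 :\ f); rewrite -eq (negbTE eF1).
  - done.
have img i : [set phi F | F in A i] \subset B i.
  apply/subsetP => K /imsetP[F]; rewrite !inE /is_pathset /= => /andP[/andP[sF hF] /eqP cF] ->.
  have eF : e \notin F :\ f by rewrite in_setD1 andbC; apply/negP => /andP[/(subsetP sF) h _]; rewrite h in eE.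
  rewrite /phi; case: ifP => hf.
  - apply/andP; split; first (apply/andP; split).
    + by apply: setUS; apply: setSD.
    + by apply: (hsp_mono (subsetUr _ _)); apply: hus.
    + by rewrite cardsU1 eF -cF (cardsD1 f F) hf.
  - rewrite cF eqxx !andbT hF andbT; apply/subsetP => z zF.
    rewrite !inE (subsetP sF _ zF) andbT; apply/orP; right.
    by apply: contraFneq hf => <-.
split.
  move=> i; rewrite /N -/(A i) -/(B i) -(card_in_imset (inj i)); exact: subset_leq_card.
move=> K sK eK hK nK.
have KB : K \in B #|K| by rewrite inE /is_pathset /= sK hK eqxx.
have : [set phi F | F in A #|K|] \subset B #|K| :\ K.
  apply/subsetP => z zi; rewrite in_setD1 (subsetP (img _) _ zi) andbT.
  apply/negP => /eqP ez; subst z; case/imsetP: zi => F; rewrite inE /is_pathset /=.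
  move=> /andP[/andP[sF hF] _]; rewrite /phi; case: ifP => hf ez.
  - have eF : e \notin F by apply: contra eE; apply: (subsetP sF).
    have eF' : e \notin F :\ f by rewrite in_setD1 (negbTE eF) andbF.
    by move: nK; rewrite ez setU1K // (hus _ sF hF hf).
  - by move: eK; rewrite ez => /(subsetP sF); rewrite (negbTE eE).
move/subset_leq_card; rewrite (card_in_imset (inj _)) => h.
rewrite /N -/(A _) -/(B _) (cardsD1 K (B #|K|)) KB.
by apply: leq_ltn_trans h _.
Qed.


Lemma swap_strong m d E s t (f e : {set 'I_n}) K :
  [forall x in E, #|x| == 2] -> s != t -> #|E| == m ->
  f \in E -> e \notin E -> #|e| == 2 ->
  (forall F, F \subset E -> has_short_path F s t d -> f \in F -> has_short_path (F :\ f) s t d) ->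
  K \subset e |: (E :\ f) -> e \in K -> has_short_path K s t d ->
  ~~ has_short_path (K :\ e) s t d ->
  exists H, in_T m H /\ stronger d m H (TTGraph E s t).
Proof.
move=> h1 h2 h3 h4 h5 h6 h7 sK eK hK nK.
have [hT [hw hs]] := swap h1 h2 h3 h4 h5 h6 h7.
exists (TTGraph (e |: (E :\ f)) s t); split => //; split => [i _|]; first exact: hw.
exists #|K|; split; last exact: hs.
apply/andP; split; first by apply/card_gt0P; exists e.
by move: hT => /andP[_ /eqP <-]; exact: subset_leq_card.
Qed.

Lemma path_avoid F (f : {set 'I_n}) v x p :
  v \in f -> v \notin x :: p -> path (adj F) x p -> path (adj (F :\ f)) x p.
Proof.
move=> hv; elim: p x => [|y p IH] x //=.
rewrite inE negb_or => /andP[vx vyp] /andP[hxy hp]; apply/andP; split; last first.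
  by apply: IH.
rewrite /adj in_setD1 (hxy : [set x; y] \in F) andbT; apply/eqP => ef; move: hv; rewrite -ef in_set2.
case/orP => /eqP ev; subst v; first by rewrite eqxx in vx.
by move: vyp; rewrite inE eqxx.
Qed.

Lemma pendant_useless E F s t v d :
  v != s -> v != t -> (forall y, adj E v y -> y = s) -> F \subset E ->
  has_short_path F s t d -> has_short_path (F :\ [set s; v]) s t d.
Proof.
move=> vs vt hnb sF /hspP [p [h0 hp hl hu]]; apply/hspP; exists p; split => //.
apply: (path_avoid (v := v)); [by rewrite in_set2 eqxx orbT | | exact: hp].
rewrite inE negb_or vs /=; apply/negP => vp.
case/splitPr: vp hp hl hu => p1 p2.
rewrite cat_path last_cat /= => /and3P[_ _ hp2].
case: p2 hp2 => [|w p3] /=; first by rewrite (negbTE vt).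
case/andP => hvw _ _; have ws := hnb w (subsetP sF _ hvw); subst w.
by rewrite /= mem_cat !inE eqxx !orbT.
Qed.

Lemma tpend_useless E F s t (f : {set 'I_n}) d :
  s != t -> 1 <= d -> (forall y, adj E t y -> y = s) -> F \subset E -> f != [set s; t] ->
  has_short_path F s t d -> has_short_path (F :\ f) s t d.
Proof.
move=> st d1 hnb sF fst /hspP [p [_ hp hl hu]].
have stF : [set s; t] \in F.
  case/lastP: p hp hl hu => [|q y] /=; first by move=> _ /eqP e; rewrite e eqxx in st.
  rewrite rcons_path last_rcons => /andP[_ h] /eqP e _; subst y.
  have := hnb (last s q); rewrite adjC /adj (subsetP sF _ h) => /(_ isT) e.
  by move: h; rewrite /adj e.
apply/hspP; exists [:: t]; split => //=.
  by rewrite /adj in_setD1 stF andbT eq_sym fst.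
by rewrite inE st.
Qed.

Lemma tpend_strict m d E s t x :
  2 <= d -> 3 <= m -> [forall z in E, #|z| == 2] -> s != t -> #|E| == m ->
  (forall y, adj E t y -> y = s) -> [set s; t] \in E -> adj E s x -> x != t ->
  exists H, in_T m H /\ stronger d m H (TTGraph E s t).
Proof.
move=> d2 m3 hwf st hc hnb stE sx xt.
have sxn : s != x := edge_neq hwf sx.
have : 0 < #|E :\ [set s; t] :\ [set s; x]|.
  have h1 : #|E| <= 1 + #|E :\ [set s; t]|.
    by rewrite {1}(cardsD1 [set s;t] E) leq_add2r leq_b1.
  have h2 : #|E :\ [set s; t]| <= 1 + #|E :\ [set s; t] :\ [set s; x]|.
    by rewrite {1}(cardsD1 [set s;x] (E :\ [set s; t])) leq_add2r leq_b1.
  move: hc => /eqP hc; lia.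
case/card_gt0P => f; rewrite !in_setD1 => /and3P[fsx fst fE].
pose e := [set x; t].
have eE : e \notin E.
  apply/negP => h; have := hnb x; rewrite adjC /adj h => /(_ isT) xs.
  by rewrite xs eqxx in sxn.
apply: (swap_strong (f := f) (e := e) (K := [set [set s; x]; e])) => //.
- by rewrite cards2 xt.
- move=> F sF hF _; have d1 : 1 <= d := ltnW d2.
    exact: (@tpend_useless E F s t _ d st d1 hnb sF fst hF).
- apply/subsetP => z; rewrite in_set2 => /orP[/eqP->|/eqP->]; rewrite !inE ?eqxx //.
  by rewrite (eq_sym [set s; x] f) fsx (sx : [set s; x] \in E) orbT.
- by rewrite in_set2 eqxx orbT.
- apply/hspP; exists [:: x; t]; split => //=.
    by rewrite /adj !in_set2 !eqxx /= ?orbT.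
  by rewrite !inE negb_or sxn st xt.
- apply: (@hsp_t_iso _ s t d st) => y; apply/negP; rewrite /adj in_setD1 in_set2.
  case/andP => ne /orP[/eqP eq|/eqP eq]; last by rewrite eq eqxx in ne.
  have : t \in [set y; t] by rewrite set22.
  rewrite eq in_set2 => /orP[/eqP ts|/eqP tx].
    by rewrite ts eqxx in st.
  by rewrite tx eqxx in xt.
Qed.

Lemma weak_trans m d (G H1 H : ttgraph n) :
  (forall i, N d i G <= N d i H1) -> stronger d m H H1 -> stronger d m H G.
Proof.
move=> hw [h1 [j [hj hs]]]; split.
  by move=> i hi; apply: leq_trans (hw i) (h1 i hi).
by exists j; split => //; apply: leq_ltn_trans (hw j) hs.
Qed.

Lemma s2l (a b c d : 'I_n) : [set a; b] = [set c; d] -> (a == c) || (a == d).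
Proof. by move=> h; have := set21 a b; rewrite h in_set2. Qed.
Lemma s2r (a b c d : 'I_n) : [set a; b] = [set c; d] -> (b == c) || (b == d).
Proof. by move=> h; have := set22 a b; rewrite h in_set2. Qed.

End S.

Unset Implicit Arguments.

Theorem lemma6 (n m d : nat) (G : ttgraph n) (v : 'I_n) :
  5 <= n -> 5 <= m -> 3 <= d ->
  in_T m G ->
  degree (tt_edges G) v = 1 -> adj (tt_edges G) v (tt_s G) ->
  ~ complete (del_edge G (tt_s G) v) ->
  exists H : ttgraph n, in_T m H /\ stronger d m H G.
Proof.
case: G => E s t /= hn hm hd hT hdeg hvs hnc.
move: hT; rewrite /in_T /tt_wf /= => /andP[/andP[hwf st] hc].
have vs : v != s := edge_neq hwf hvs.
have hnb : forall y, adj E v y -> y = s.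
  move: hdeg; rewrite /degree => /eqP /cards1P [z hz] y hy.
  have : y \in [set z] by rewrite -hz inE.
  have : s \in [set z] by rewrite -hz inE.
  by rewrite !in_set1 => /eqP -> /eqP ->.
case: (eqVneq v t) => [vt | vt].
- subst v.
  have stE : [set s; t] \in E by rewrite setUC.
  case: (classic (exists x, adj E s x /\ x != t)) => [[x [sx xt]] | nox].
    exact: (tpend_strict (ltnW hd) (ltnW (ltnW hm)) hwf st hc hnb stE sx xt).
  have : 0 < #|E :\ [set s; t]|.
    have h1 : #|E| <= 1 + #|E :\ [set s; t]|.
      by rewrite {1}(cardsD1 [set s;t] E) leq_add2r leq_b1.
    move: hc => /eqP hc.
    have h2 : 2 <= 1 + #|E :\ [set s; t]| by apply: leq_trans h1; rewrite hc; lia.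
    by move: h2; rewrite add1n ltnS.
  case/card_gt0P => f; rewrite in_setD1 => /andP[fst fE].
  have /cards2P [x [y [xy fxy]]] : #|f| == 2 by have := forallP hwf f; rewrite fE.
  subst f.
  have xs : x != s.
    apply/eqP => exs; subst x; apply: nox; exists y; split; first by [].
    by apply: contraNneq fst => ->.
  have xt : x != t.
    apply/eqP => ext; subst x; have ys := hnb y fE; subst y.
    by rewrite setUC eqxx in fst.
  pose e1 := [set s; x].
  have e1E : e1 \notin E by apply/negP => h; apply: nox; exists x.
  have use : forall F : {set {set 'I_n}}, F \subset E -> has_short_path F s t d -> [set x; y] \in F ->
      has_short_path (F :\ [set x; y]) s t d.
    move=> F sF hF _; have d1 : 1 <= d := ltnW (ltnW hd).
    exact: (@tpend_useless n E F s t _ d st d1 hnb sF fst hF).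
  have e12 : #|e1| == 2 by rewrite cards2 (eq_sym s x) xs.
  have [hT1 [hw1 _]] := swap hwf st hc fE e1E e12 use.
  move: (hT1); rewrite /in_T /tt_wf /= => /andP[/andP[hwf1 _] hc1].
  have nb1 : forall z, adj (e1 |: (E :\ [set x; y])) t z -> z = s.
    move=> z; rewrite /adj !inE => /orP[/eqP h|/andP[_ h]]; last exact: hnb.
    by have := s2l h; rewrite eq_sym (negbTE st) eq_sym (negbTE xt).
  have st1 : [set s; t] \in e1 |: (E :\ [set x; y]) by rewrite !inE stE andbT; apply/orP; right; rewrite eq_sym.
  have sx1 : adj (e1 |: (E :\ [set x; y])) s x by rewrite /adj setU11.
  have [H [hTH hsH]] := tpend_strict (ltnW hd) (ltnW (ltnW hm)) hwf1 st hc1 nb1 st1 sx1 xt.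
  by exists H; split => //; apply: weak_trans hw1 hsH.
- have useless : forall F : {set {set 'I_n}}, F \subset E -> has_short_path F s t d ->
      [set s; v] \in F -> has_short_path (F :\ [set s; v]) s t d.
    move=> F sF hF _; exact: (@pendant_useless n E F s t v d vs vt hnb sF hF).
  have svE : [set s; v] \in E by rewrite setUC.
  have tsv : [set s; v] != [set s; t] -> True by [].
  case: (boolP ([set s; t] \in E)) => stE; last first.
    apply: (swap_strong (K := [set [set s; t]]) hwf st hc svE stE _ useless).
    - by rewrite cards2 st.
    - by apply/subsetP => z; rewrite in_set1 => /eqP->; rewrite setU11.
    - by rewrite set11.
    - apply/hspP; exists [:: t]; split => //=; [lia | by rewrite /adj set11 | by rewrite inE st].
    - apply: (hsp_s_iso d st) => z; rewrite /adj in_setD1 in_set1.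
      by case: eqP.
  set E' := E :\ [set s; v].
  have E'E : forall a b, adj E' a b -> adj E a b.
    by move=> a b; rewrite /adj in_setD1 => /andP[_ ->].
  have nE' : forall a b, adj E' a b -> a != b.
    by move=> a b /E'E; apply: edge_neq hwf.
  have notE : forall a b, ~~ adj E' a b -> [set a; b] != [set s; v] -> [set a; b] \notin E.
    move=> a b h1 h2; apply: contra h1 => h; by rewrite /adj in_setD1 h2 h.
  have tnot : forall a, [set a; t] != [set s; v].
    move=> a; apply/eqP => h; have := s2r h.
    by rewrite (eq_sym t s) (negbTE st) (eq_sym t v) (negbTE vt).
  have stE' : adj E' s t.
    by rewrite /adj in_setD1 stE andbT tnot.
  have [x [y [cx [cy [xy nxy]]]]] : exists x y, [/\ connect (adj E') s x,
      connect (adj E') s y, x != y & ~~ adj E' x y].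
    apply: NNPP => hno; apply: hnc; split.
      by apply: connect1.
    move=> a b ca cb ab; apply/negPn/negP => nab; apply: hno; by exists a, b.
  suff [e [K [eE e2 sK eK [hK nK]]]] : exists (e : {set 'I_n}) (K : {set {set 'I_n}}), [/\ e \notin E, #|e| == 2,
      K \subset e |: E', e \in K & has_short_path K s t d /\ ~~ has_short_path (K :\ e) s t d].
    exact: (swap_strong hwf st hc svE eE e2 useless sK eK hK nK).
  case: (classic (exists a, [/\ adj E' s a, a != t & ~~ adj E' a t])) => [[a [sa a_t n_at]]|c1].
    have sa_n := nE' _ _ sa.
    exists [set a; t], [set [set s; a]; [set a; t]]; split; last split.
    - exact: notE _ _ n_at (tnot a).
    - by rewrite cards2 a_t.
    - apply/subsetP => z; rewrite in_set2 => /orP[/eqP->|/eqP->]; rewrite in_setU1 ?eqxx ?orbT //.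
      by rewrite (sa : [set s; a] \in E') orbT.
    - by rewrite in_set2 eqxx orbT.
    - apply/hspP; exists [:: a; t]; split.
      + exact: ltnW hd.
      + by rewrite /= /adj !in_set2 !eqxx ?orbT.
      + by rewrite /= eqxx.
      + by rewrite /= !inE negb_or sa_n st a_t.
    - apply: (hsp_t_iso d st) => z; apply/negP.
      rewrite /adj in_setD1 in_set2 => /andP[ne /orP[/eqP h|/eqP h]]; last by rewrite h eqxx in ne.
      by have := s2r h; rewrite (eq_sym t s) (negbTE st) (eq_sym t a) (negbTE a_t).
  case: (classic (exists b, [/\ adj E' t b, b != s & ~~ adj E' s b])) => [[b [tb bs nsb]]|c2].
    have tb_n := nE' _ _ tb.
    have bv : b != v.
      apply/eqP => ebv; subst b; have := hnb t; rewrite adjC => /(_ (E'E _ _ tb)) ets.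
      by rewrite ets eqxx in st.
    exists [set s; b], [set [set s; b]; [set b; t]]; split; last split.
    - apply: notE _ _ nsb _; apply/eqP => h; have := s2r h.
      by rewrite (negbTE bs) (negbTE bv).
    - by rewrite cards2 (eq_sym s b) bs.
    - apply/subsetP => z; rewrite in_set2 => /orP[/eqP->|/eqP->]; rewrite in_setU1 ?eqxx ?orbT //.
      by rewrite setUC (tb : [set t; b] \in E') orbT.
    - by rewrite in_set2 eqxx.
    - apply/hspP; exists [:: b; t]; split.
      + exact: ltnW hd.
      + by rewrite /= /adj !in_set2 !eqxx ?orbT.
      + by rewrite /= eqxx.
      + by rewrite /= !inE negb_or (eq_sym s b) bs st (eq_sym b t) tb_n.
    - apply: (hsp_s_iso d st) => z; apply/negP.
      rewrite /adj in_setD1 in_set2 => /andP[ne /orP[/eqP h|/eqP h]]; first by rewrite h eqxx in ne.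
      by have := s2l h; rewrite (eq_sym s b) (negbTE bs) (negbTE st).
  have H3a : forall a, adj E' s a -> a != t -> adj E' a t.
    by move=> a h1 h2; apply/negPn/negP => h3; apply: c1; exists a.
  have H3b : forall b, adj E' t b -> b != s -> adj E' s b.
    by move=> b h1 h2; apply/negPn/negP => h3; apply: c2; exists b.
  pose Ns z := (z == s) || adj E' s z.
  case: (boolP (Ns x && Ns y)) => [/andP[nx ny] | nxy'].
    have xs : x != s.
      apply/eqP => exs; subst x; move: ny.
      by rewrite /Ns (negbTE nxy) orbF (eq_sym y s) (negbTE xy).
    have ys : y != s.
      apply/eqP => eys; subst y; move: nx.
      by rewrite /Ns adjC (negbTE nxy) orbF (negbTE xy).
    have sx : adj E' s x by move: nx; rewrite /Ns (negbTE xs).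
    have sy : adj E' s y by move: ny; rewrite /Ns (negbTE ys).
    have xt : x != t.
      apply/eqP => ext; subst x.
      have yt : y != t by rewrite eq_sym.
      by have := H3a y sy yt; rewrite adjC (negbTE nxy).
    have yt : y != t.
      apply/eqP => eyt; subst y.
      by have := H3a x sx xt; rewrite (negbTE nxy).
    have xtE := H3a x sx xt; have ytE := H3a y sy yt.
    have sx_n := nE' _ _ sx; have sy_n := nE' _ _ sy.
    exists [set x; y], [set [set s; x]; [set x; y]; [set y; t]]; split; last split.
    - apply: notE _ _ nxy _; apply/eqP => h; have := set21 s v; rewrite -h in_set2.
      by rewrite (negbTE sx_n) (negbTE sy_n).
    - by rewrite cards2 xy.
    - apply/subsetP => z; rewrite !inE => /orP[/orP[/eqP->|/eqP->]|/eqP->]; rewrite ?eqxx //.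
        by move: (sx); rewrite /adj !inE => ->; rewrite orbT.
      by move: (ytE); rewrite /adj !inE => ->; rewrite orbT.
    - by rewrite !inE eqxx !orbT.
    - apply/hspP; exists [:: x; y; t]; split.
      + exact: hd.
      + by rewrite /= /adj !inE !eqxx ?orbT.
      + by rewrite /= eqxx.
      + by rewrite /= !inE !negb_or sx_n sy_n st xy xt yt.
    - apply/hspP => [[p [_ hp hl hu]]].
      have adjK : forall a b, adj ([set [set s; x]; [set x; y]; [set y; t]] :\ [set x; y]) a b ->
          [set a; b] = [set s; x] \/ [set a; b] = [set y; t].
        move=> a b; rewrite /adj in_setD1 !inE => /andP[ne /orP[/orP[/eqP h|/eqP h]|/eqP h]].
        + by left.
        + by rewrite h eqxx in ne.
        + by right.
      case: p hp hl hu => [|w p] /=; first by move=> _ /eqP ets; rewrite ets eqxx in st.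
      case/andP => /adjK [h|h]; last first.
        by have := s2l h; rewrite (negbTE sy_n) (negbTE st).
      have := s2r h => /orP[/eqP ws|/eqP wx].
        by subst w => _ _ /andP[]; rewrite inE eqxx.
      subst w; case: p => [|w p] /=; first by move=> _ /eqP ext; rewrite ext eqxx in xt.
      case/andP => /adjK [h'|h'] _ _; last first.
        by have := s2l h'; rewrite (negbTE xy) (negbTE xt).
      move=> /andP[]; rewrite !inE !negb_or => /andP[_ /andP[snw _]] /andP[/andP[xnw _] _].
      by have := s2r h'; rewrite (eq_sym w s) (negbTE snw) (eq_sym w x) (negbTE xnw).
  have [b0 [cb0 nb0]] : exists b0, connect (adj E') s b0 /\ ~~ Ns b0.
    by move: nxy'; rewrite negb_and => /orP[h|h]; [exists x | exists y].
  have [a [b [sa ab nb]]] : exists a b, [/\ adj E' s a, adj E' a b & ~~ Ns b].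
    apply: NNPP => hno; move: nb0; case/connectP: cb0 => p hp -> {b0}.
    suff : forall z, Ns z -> path (adj E') z p -> Ns (last z p).
      by move=> /(_ s); rewrite /Ns eqxx => /(_ isT hp) ->.
    elim: p {hp} => [|w p IH] z //= hz /andP[hzw hp]; apply: IH hp.
    case/orP: hz => [/eqP ez|hz].
      by subst z; rewrite /Ns hzw orbT.
    by apply/negPn/negP => hw; apply: hno; exists z, w.
  move: nb; rewrite /Ns negb_or => /andP[bs nsb].
  have a_t : a != t.
    by apply/eqP => eat; subst a; have := H3b b ab bs; rewrite (negbTE nsb).
  have atE := H3a a sa a_t.
  have nbt : ~~ adj E' b t.
    apply/negP => h; have h' : adj E' t b by rewrite adjC.
    by have := H3b b h' bs; rewrite (negbTE nsb).
  have bt : b != t by apply/eqP => ebt; subst b; rewrite stE' in nsb.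
  have sa_n := nE' _ _ sa; have ab_n := nE' _ _ ab.
  exists [set b; t], [set [set s; a]; [set a; b]; [set b; t]]; split; last split.
  - exact: notE _ _ nbt (tnot b).
  - by rewrite cards2 bt.
  - apply/subsetP => z; rewrite !inE => /orP[/orP[/eqP->|/eqP->]|/eqP->]; rewrite ?eqxx //.
      by move: (sa); rewrite /adj !inE => ->; rewrite orbT.
    by move: (ab); rewrite /adj !inE => ->; rewrite orbT.
  - by rewrite !inE eqxx !orbT.
  - apply/hspP; exists [:: a; b; t]; split.
    + exact: hd.
    + by rewrite /= /adj !inE !eqxx ?orbT.
    + by rewrite /= eqxx.
    + by rewrite /= !inE !negb_or sa_n (eq_sym s b) bs st ab_n a_t bt.
  - apply: (hsp_t_iso d st) => z; apply/negP.
    rewrite /adj in_setD1 !inE => /andP[ne /orP[/orP[/eqP h|/eqP h]|/eqP h]];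
      last by rewrite h eqxx in ne.
      by have := s2r h; rewrite (eq_sym t s) (negbTE st) (eq_sym t a) (negbTE a_t).
    by have := s2r h; rewrite (eq_sym t a) (negbTE a_t) (eq_sym t b) (negbTE bt).
Qed.
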